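(* Let $\alpha\in(0,1]$ and let $n$ be such that $n^\alpha=2^q$ for a positive integer $q$. Let $p\in B_n$ and let $p'=p+v$ where $v$ is one of the vectors $(\pm n^\alpha,0)$, $(0,\pm n^\alpha)$. If $p'\in\mathrm{conv}(B_n)$, then $p'\in B_n$.
   Context: Let $A_n=\{(i,j)\in\mathbb{Z}^2: 0\le i,j\le 14n\}$. The sparse grid $B_n\subseteq A_n$ is the set of points of $A_n$ of at least one of the following forms: (1) $(i,j)$ with $n^\alpha \mid ij$; (2) $(i+k,j+k)$ with $n^\alpha\mid i$, $n^\alpha\mid j$, $k\in\{1,\dots,n^\alpha\}$; (3) $(i+k,j-k)$ with $n^\alpha\mid i$, $n^\alpha\mid j$, $k\in\{1,\dots,n^\alpha\}$. $\mathrm{conv}(B_n)$ denotes the convex hull of $B_n$. *)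

(* Defs.v *)
From Stdlib Require Import Reals ZArith List Lra Lia.
Import ListNotations.
Open Scope R_scope.

Definition in_A (n : Z) (x y : Z) : Prop :=
  (0 <= x <= 14 * n)%Z /\ (0 <= y <= 14 * n)%Z.

(* The sparse grid B_n, where m stands for the integer n^alpha. *)
Definition in_B (n m : Z) (x y : Z) : Prop :=
  in_A n x y /\
  ( (m | x * y)%Z
  \/ (exists i j k : Z, (m | i)%Z /\ (m | j)%Z /\ (1 <= k <= m)%Z /\
        x = (i + k)%Z /\ y = (j + k)%Z)
  \/ (exists i j k : Z, (m | i)%Z /\ (m | j)%Z /\ (1 <= k <= m)%Z /\
        x = (i + k)%Z /\ y = (j - k)%Z) ).

Definition in_conv (S : Z -> Z -> Prop) (px py : R) : Prop :=
  exists l : list (R * (Z * Z)),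
    Forall (fun wp => 0 <= fst wp /\ S (fst (snd wp)) (snd (snd wp))) l /\
    fold_right Rplus 0 (map fst l) = 1 /\
    fold_right Rplus 0 (map (fun wp => fst wp * IZR (fst (snd wp))) l) = px /\
    fold_right Rplus 0 (map (fun wp => fst wp * IZR (snd (snd wp))) l) = py.

(* Main.v *)
Require Import Defs.
From Stdlib Require Import Reals ZArith List Lra Lia.
Open Scope R_scope.

Lemma conv_bound (S : Z -> Z -> Prop) (f : Z * Z -> Z) (lo hi : R) (l : list (R * (Z * Z))) :
  (forall a b, S a b -> lo <= IZR (f (a, b)) <= hi) ->
  Forall (fun wp => 0 <= fst wp /\ S (fst (snd wp)) (snd (snd wp))) l ->
  lo * fold_right Rplus 0 (map fst l) <=
    fold_right Rplus 0 (map (fun wp => fst wp * IZR (f (snd wp))) l) <=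
  hi * fold_right Rplus 0 (map fst l).
Proof.
  intros H HF. induction HF as [|[w [a b]] l [Hw HS] HF IH]; simpl in *.
  - lra.
  - destruct (H a b HS) as [H1 H2]. split; nra.
Qed.

Lemma B_shift (n m x y vx vy : Z) :
  (m | vx)%Z -> (m | vy)%Z ->
  in_B n m x y -> in_A n (x + vx) (y + vy) -> in_B n m (x + vx) (y + vy).
Proof.
  intros [a Ha] [b Hb] [_ H] HA. split; [exact HA|].
  destruct H as [H | [H | H]].
  - left. destruct H as [c Hc]. exists (c + b * x + a * y + a * b * m)%Z.
    subst. nia.
  - right; left. destruct H as (i & j & k & Hi & Hj & Hk & -> & ->).
    exists (i + vx)%Z, (j + vy)%Z, k. repeat split; try lia.
    + apply Z.divide_add_r; [exact Hi| exists a; exact Ha].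
    + apply Z.divide_add_r; [exact Hj| exists b; exact Hb].
  - right; right. destruct H as (i & j & k & Hi & Hj & Hk & -> & ->).
    exists (i + vx)%Z, (j + vy)%Z, k. repeat split; try lia.
    + apply Z.divide_add_r; [exact Hi| exists a; exact Ha].
    + apply Z.divide_add_r; [exact Hj| exists b; exact Hb].
Qed.

Theorem lemma6 (alpha : R) (n q : nat) (x y vx vy : Z) :
  0 < alpha <= 1 ->
  (1 <= q)%nat ->
  Rpower (INR n) alpha = 2 ^ q ->
  in_B (Z.of_nat n) (2 ^ Z.of_nat q)%Z x y ->
  ((vx = 2 ^ Z.of_nat q /\ vy = 0) \/ (vx = - 2 ^ Z.of_nat q /\ vy = 0) \/
   (vx = 0 /\ vy = 2 ^ Z.of_nat q) \/ (vx = 0 /\ vy = - 2 ^ Z.of_nat q))%Z ->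
  in_conv (in_B (Z.of_nat n) (2 ^ Z.of_nat q)%Z) (IZR (x + vx)) (IZR (y + vy)) ->
  in_B (Z.of_nat n) (2 ^ Z.of_nat q)%Z (x + vx) (y + vy).
Proof.
  intros _ _ _ HB Hv Hc.
  apply B_shift; [ | | exact HB | ].
  - destruct Hv as [[-> _]|[[-> _]|[[-> _]|[-> _]]]];
      first [apply Z.divide_refl | apply Z.divide_opp_r, Z.divide_refl | apply Z.divide_0_r].
  - destruct Hv as [[_ ->]|[[_ ->]|[[_ ->]|[_ ->]]]];
      first [apply Z.divide_refl | apply Z.divide_opp_r, Z.divide_refl | apply Z.divide_0_r].
  - destruct Hc as (l & HF & H1 & Hx & Hy).
    assert (Hbx : 0 * fold_right Rplus 0 (map fst l) <=
      fold_right Rplus 0 (map (fun wp => fst wp * IZR (fst (snd wp))) l) <=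
      IZR (14 * Z.of_nat n) * fold_right Rplus 0 (map fst l)).
    { apply (conv_bound (in_B (Z.of_nat n) (2 ^ Z.of_nat q)%Z) fst); [|exact HF].
      intros a b [[Ha _] _]. cbn [fst snd]. split; [apply (IZR_le 0)|apply IZR_le]; lia. }
    assert (Hby : 0 * fold_right Rplus 0 (map fst l) <=
      fold_right Rplus 0 (map (fun wp => fst wp * IZR (snd (snd wp))) l) <=
      IZR (14 * Z.of_nat n) * fold_right Rplus 0 (map fst l)).
    { apply (conv_bound (in_B (Z.of_nat n) (2 ^ Z.of_nat q)%Z) snd); [|exact HF].
      intros a b [[_ Hb] _]. cbn [fst snd]. split; [apply (IZR_le 0)|apply IZR_le]; lia. }
    cbn [fst snd] in Hbx, Hby.
    rewrite H1, Hx in Hbx. rewrite H1, Hy in Hby.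
    rewrite Rmult_0_l, Rmult_1_r in Hbx, Hby.
    destruct Hbx as [A1 A2]; destruct Hby as [B1 B2].
    apply le_IZR in A1, A2, B1, B2.
    split; lia.
Qed.
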